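(* Let $A$ be a word-topic matrix, $\delta\ge0$, $B$ a $\delta$-biased minimum variance inverse of $A$, $x^*\in\mathcal{S}_k$, and let $x$ be the output of the Thresholded Linear Inverse algorithm on a document of $n$ words generated from $x^*$. Then with probability at least $1-2/k$: for every $i\in[k]$, if $x^*_i=0$ then $x_i=0$, and if $x^*_i\ge 4\lambda_\delta(A)\sqrt{(\log k)/n}+2\delta$ then $x_i>0$. In particular, if $x^*$ is $r$-sparse, all its nonzero entries are at least $\epsilon/r$ for some $\epsilon>4\delta r$, and $n\ge 64\,\lambda_\delta(A)^2r^2\log k/\epsilon^2$, then with probability at least $1-2/k$ the support of $x$ equals the support of $x^*$.
   Context: A word-topic matrix is a matrix $A\in\mathbb{R}^{D\times k}$ with nonnegative entries whose columns each sum to $1$. $\mathcal{S}_k=\{z\in\mathbb{R}^k_{\ge0}:\sum_i z_i=1\}$. A document of $n$ words generated from $x\in\mathcal{S}_k$ consists of words drawn i.i.d. from the categorical distribution on $[D]$ with probabilities $Ax$; its count vector $y\in\mathbb{R}^D$ records how many times each word occurs. For a matrix $M$, $\|M\|_{\max}=\max_{i,j}|M_{ij}|$. $\lambda_\delta(A)$ is the optimal value of: minimize $\|B\|_{\max}$ over $B\in\mathbb{R}^{k\times D}$ subject to $\|BA-I_k\|_{\max}\le\delta$; a $\delta$-biased minimum variance inverse is a matrix $B$ with $\|BA-I_k\|_{\max}\le\delta$ and $\|B\|_{\max}=\lambda_\delta(A)$. The Thresholded Linear Inverse algorithm, given $y$ and $B$: computes $\hat x=\frac1n By$; sets $\tau=2\lambda_\delta(A)\sqrt{(\log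 k)/n}+\delta$; outputs $x\in\mathbb{R}^k$ with $x_i=0$ if $\hat x_i<\tau$ and $x_i=\hat x_i$ otherwise. A vector is $r$-sparse if it has at most $r$ nonzero entries. *)

(* Defs.v *)
From Stdlib Require Import Reals Lra List ClassicalDescription.
Import ListNotations.
Open Scope R_scope.

(* Matrices are functions on indices; only indices i < rows, j < cols matter. *)

Definition sumR (n : nat) (f : nat -> R) : R :=
  fold_right Rplus 0 (map f (seq 0 n)).

(* max-entry norm of an m x n matrix (0 for an empty matrix) *)
Definition maxnorm (m n : nat) (M : nat -> nat -> R) : R :=
  fold_right Rmax 0
    (flat_map (fun i => map (fun j => Rabs (M i j)) (seq 0 n)) (seq 0 m)).

Definition word_topic (D k : nat) (A : nat -> nat -> R) : Prop :=
  (forall i j, (i < D)%nat -> (j < k)%nat -> 0 <= A i j) /\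
  (forall j, (j < k)%nat -> sumR D (fun i => A i j) = 1).

Definition simplex (k : nat) (z : nat -> R) : Prop :=
  (forall i, (i < k)%nat -> 0 <= z i) /\ sumR k z = 1.

Definition matmul (D : nat) (B A : nat -> nat -> R) : nat -> nat -> R :=
  fun i j => sumR D (fun l => B i l * A l j).

Definition idm (i j : nat) : R := if Nat.eqb i j then 1 else 0.

Definition feasible (D k : nat) (A : nat -> nat -> R) (delta : R)
    (B : nat -> nat -> R) : Prop :=
  maxnorm k k (fun i j => matmul D B A i j - idm i j) <= delta.

(* lam is the optimal value lambda_delta(A) of
   min ||B||_max s.t. ||BA - I||_max <= delta  (infimum over feasible B) *)
Definition is_lambda (D k : nat) (A : nat -> nat -> R) (delta lam : R) : Prop :=
  (forall B, feasible D k A delta B -> lam <= maxnorm k D B) /\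
  (forall l, (forall B, feasible D k A delta B -> l <= maxnorm k D B) -> l <= lam).

Definition min_var_inverse (D k : nat) (A : nat -> nat -> R) (delta lam : R)
    (B : nat -> nat -> R) : Prop :=
  feasible D k A delta B /\ maxnorm k D B = lam.

(* Documents of n words over [D]: lists of length n of words < D. *)
Fixpoint all_docs (D n : nat) : list (list nat) :=
  match n with
  | O => [[]]
  | S n' => flat_map (fun w => map (fun j => j :: w) (seq 0 D)) (all_docs D n')
  end.

Definition doc_prob (p : nat -> R) (w : list nat) : R :=
  fold_right Rmult 1 (map p w).

Definition indic (P : Prop) : R :=
  if excluded_middle_informative P then 1 else 0.

(* probability that a document of n words drawn i.i.d. from p satisfies E *)
Definition Prob (D n : nat) (p : nat -> R) (E : list nat -> Prop) : R :=
  fold_right Rplus 0 (map (fun w => doc_prob p w * indic (E w)) (all_docs D n)).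

Definition word_dist (D k : nat) (A : nat -> nat -> R) (x : nat -> R) : nat -> R :=
  fun l => sumR k (fun j => A l j * x j).

Definition counts (w : list nat) : nat -> R :=
  fun l => INR (count_occ Nat.eq_dec w l).

Definition TLI (D k n : nat) (B : nat -> nat -> R) (lam delta : R)
    (w : list nat) : nat -> R :=
  let xhat := fun i => / INR n * sumR D (fun l => B i l * counts w l) in
  let tau := 2 * lam * sqrt (ln (INR k) / INR n) + delta in
  fun i => if Rlt_dec (xhat i) tau then 0 else xhat i.

Definition nnz (k : nat) (z : nat -> R) : nat :=
  length (filter (fun i => if Req_EM_T (z i) 0 then false else true) (seq 0 k)).

Definition sparse (k r : nat) (z : nat -> R) : Prop := (nnz k z <= r)%nat.

(* Main.v *)
Require Import Defs.
From Stdlib Require Import Reals List Lra Lia ClassicalDescription Classical.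
From Coquelicot Require Import Coquelicot.
Import ListNotations.
Open Scope R_scope.


Lemma mono0 (f df : R -> R) (a : R) :
  (forall x, is_derive f x (df x)) -> (forall x, 0 <= x -> 0 <= df x) ->
  0 <= a -> f 0 <= f a.
Proof.
  intros Hd Hp Ha.
  destruct (MVT_gen f 0 a df) as [c [Hc Heq]].
  - intros x _. apply Hd.
  - intros x _. apply continuity_pt_filterlim. apply (@ex_derive_continuous R_AbsRing R_NormedModule).
    eexists; apply Hd.
  - rewrite Rmin_left in Hc by lra. rewrite Rmax_right in Hc by lra.
    assert (0 <= df c * (a - 0)) by (apply Rmult_le_pos; [apply Hp; lra | lra]).
    lra.
Qed.

Lemma hpos (m u : R) : -1 <= m <= 1 ->
  0 < (1+m)/2 * exp u + (1-m)/2 * exp (-u).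
Proof.
  intros Hm. pose proof (exp_pos u). pose proof (exp_pos (-u)).
  destruct (Rle_lt_dec 0 m).
  - assert (0 < (1+m)/2 * exp u) by (apply Rmult_lt_0_compat; lra).
    assert (0 <= (1-m)/2 * exp (-u)) by (apply Rmult_le_pos; lra). lra.
  - assert (0 <= (1+m)/2 * exp u) by (apply Rmult_le_pos; lra).
    assert (0 < (1-m)/2 * exp (-u)) by (apply Rmult_lt_0_compat; lra). lra.
Qed.

Lemma hoeffding_lemma (m a : R) : -1 <= m <= 1 -> 0 <= a ->
  (1+m)/2 * exp a + (1-m)/2 * exp (-a) <= exp (m * a + a^2/2).
Proof.
  intros Hm Ha.
  set (h := fun u => (1+m)/2 * exp u + (1-m)/2 * exp (-u)).
  set (h1 := fun u => (1+m)/2 * exp u - (1-m)/2 * exp (-u)).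
  assert (Hh : forall u, 0 < h u) by (intro; apply hpos; auto).
  assert (Hid : forall u, h u * h u - h1 u * h1 u = 1 - m*m).
  { intro u. unfold h, h1; cbv beta. replace (1 - m*m) with ((1+m)*(1-m) * (exp u * exp (-u))).
    field. rewrite <- exp_plus. replace (u + - u) with 0 by ring. rewrite exp_0. ring. }
  set (K := fun u => m + u - h1 u / h u).
  assert (HK : forall u, is_derive K u (1 - (1 - m*m) / (h u * h u))).
  { intro u. unfold K. rewrite <- (Hid u). pose proof (Hh u). unfold h, h1 in *; cbv beta in *.
    auto_derive. lra. field. lra. }
  assert (HK0 : forall u, 0 <= u -> 0 <= K u).
  { intros u Hu. replace 0 with (K 0) at 1.
    2:{ unfold K, h, h1. cbv beta. rewrite Ropp_0, exp_0. field; lra. }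
    apply (mono0 K _ u HK); auto. intros x _.
    pose proof (Hh x). pose proof (Hid x).
    assert (0 <= h1 x * h1 x) by nra.
    assert ((1 - m*m) / (h x * h x) <= 1).
    { apply (Rmult_le_reg_r (h x * h x)). nra. unfold Rdiv. rewrite Rmult_assoc, Rinv_l. nra. nra. }
    lra. }
  set (G := fun u => - (h u * exp (- (m*u + u^2/2)))).
  assert (HG : forall u, is_derive G u (h u * K u * exp (- (m*u + u^2/2)))).
  { intro u. unfold G, K. pose proof (Hh u). unfold h, h1 in *; cbv beta in *.
    auto_derive. auto. replace (u * (u * 1) * / 2) with (u^2/2) by field. field. lra. }
  assert (G 0 <= G a).
  { apply (mono0 G _ a HG); auto. intros x Hx. pose proof (Hh x). pose proof (HK0 x Hx).
    pose proof (exp_pos (- (m*x + x^2/2))).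
    apply Rmult_le_pos; [apply Rmult_le_pos|]; lra. }
  unfold G in H. replace (h 0 * exp (- (m*0 + 0^2/2))) with 1 in H.
  2:{ unfold h; cbv beta. replace (- (m*0 + 0^2/2)) with 0 by field. rewrite Ropp_0, exp_0. field. }
  assert (h a * exp (- (m*a + a^2/2)) <= 1) by lra.
  pose proof (exp_pos (m*a + a^2/2)).
  rewrite exp_Ropp in H0.
  apply (Rmult_le_reg_r (/ exp (m*a + a^2/2))). apply Rinv_0_lt_compat; auto.
  rewrite Rinv_r by lra. exact H0.
Qed.

Definition LS {A} (L : list A) (f : A -> R) : R := fold_right Rplus 0 (map f L).

Lemma LS_app {A} (L1 L2 : list A) f : LS (L1 ++ L2) f = LS L1 f + LS L2 f.
Proof. induction L1; simpl; [unfold LS; simpl; lra|]. unfold LS in *; simpl. rewrite IHL1. lra. Qed.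

Lemma LS_plus {A} (L : list A) f g : LS L (fun x => f x + g x) = LS L f + LS L g.
Proof. induction L; unfold LS in *; simpl; [lra|]. rewrite IHL. lra. Qed.

Lemma LS_scal {A} (L : list A) c f : LS L (fun x => c * f x) = c * LS L f.
Proof. induction L; unfold LS in *; simpl; [lra|]. rewrite IHL. lra. Qed.

Lemma LS_le {A} (L : list A) f g : (forall x, In x L -> f x <= g x) -> LS L f <= LS L g.
Proof. induction L; intros H; unfold LS in *; simpl; [lra|].
  apply Rplus_le_compat. apply H; simpl; auto. apply IHL. intros; apply H; simpl; auto. Qed.

Lemma LS_ext {A} (L : list A) f g : (forall x, In x L -> f x = g x) -> LS L f = LS L g.
Proof. intros H. apply Rle_antisym; apply LS_le; intros x Hx; rewrite H; auto; lra. Qed.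

Lemma LS_flat_map {A B} (L : list A) (F : A -> list B) f :
  LS (flat_map F L) f = LS L (fun x => LS (F x) f).
Proof. induction L; [reflexivity|]. simpl. rewrite LS_app, IHL. unfold LS; simpl. reflexivity. Qed.

Lemma LS_map {A B} (L : list A) (g : A -> B) f : LS (map g L) f = LS L (fun x => f (g x)).
Proof. unfold LS. rewrite map_map. reflexivity. Qed.

Lemma sumR_LS n f : sumR n f = LS (seq 0 n) f.
Proof. reflexivity. Qed.

Lemma sumR_S n f : sumR (S n) f = sumR n f + f n.
Proof. rewrite !sumR_LS, seq_S, LS_app. unfold LS; simpl. lra. Qed.

Lemma sumR_0 f : sumR 0 f = 0.
Proof. reflexivity. Qed.

Lemma sumR_ext n f g : (forall i, (i < n)%nat -> f i = g i) -> sumR n f = sumR n g.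
Proof. intros H. rewrite !sumR_LS. apply LS_ext. intros x Hx. apply in_seq in Hx. apply H; lia. Qed.

Lemma sumR_le n f g : (forall i, (i < n)%nat -> f i <= g i) -> sumR n f <= sumR n g.
Proof. intros H. rewrite !sumR_LS. apply LS_le. intros x Hx. apply in_seq in Hx. apply H; lia. Qed.

Lemma sumR_plus n f g : sumR n (fun i => f i + g i) = sumR n f + sumR n g.
Proof. apply LS_plus. Qed.

Lemma sumR_scal n c f : sumR n (fun i => c * f i) = c * sumR n f.
Proof. apply LS_scal. Qed.

Lemma sumR_nonneg n f : (forall i, (i < n)%nat -> 0 <= f i) -> 0 <= sumR n f.
Proof. intros H. replace 0 with (sumR n (fun _ => 0)). apply sumR_le; auto.
  induction n; [reflexivity|]. rewrite sumR_S, IHn; [lra|]. intros; apply H; lia. Qed.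

Lemma sumR_const n c : sumR n (fun _ => c) = INR n * c.
Proof. induction n; [simpl; unfold sumR; simpl; lra|]. rewrite sumR_S, IHn, S_INR. lra. Qed.

Lemma sumR_swap n m F : sumR n (fun i => sumR m (fun j => F i j)) = sumR m (fun j => sumR n (fun i => F i j)).
Proof. induction n.
  - rewrite sumR_0. symmetry. replace (fun j => sumR 0 (fun i => F i j)) with (fun _:nat => 0) by reflexivity.
    rewrite sumR_const. lra.
  - rewrite sumR_S, IHn. rewrite <- sumR_plus. apply sumR_ext. intros; rewrite sumR_S. reflexivity. Qed.

Lemma sumR_indic n i f : (i < n)%nat -> sumR n (fun j => (if Nat.eqb i j then 1 else 0) * f j) = f i.
Proof. induction n; intros H; [lia|]. rewrite sumR_S.
  destruct (Nat.eq_dec i n) as [->|Hne].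
  - rewrite Nat.eqb_refl. replace (sumR n _) with 0. lra.
    transitivity (sumR n (fun _ => 0)). rewrite sumR_const; lra.
    apply sumR_ext. intros j Hj.
    cbv beta. destruct (Nat.eqb_spec n j); [lia|]. lra.
  - rewrite IHn by lia. destruct (Nat.eqb_spec i n); [lia|lra]. Qed.

Lemma sumR_abs n f : Rabs (sumR n f) <= sumR n (fun i => Rabs (f i)).
Proof. induction n. rewrite !sumR_0, Rabs_R0; lra.
  rewrite !sumR_S. eapply Rle_trans. apply Rabs_triang. lra. Qed.

Lemma fold_Rmax_ge (L : list R) x : In x L -> x <= fold_right Rmax 0 L.
Proof. induction L; simpl; [tauto|]. intros [->|H].
  apply Rmax_l. eapply Rle_trans; [apply IHL; auto| apply Rmax_r]. Qed.

Lemma fold_Rmax_nonneg (L : list R) : 0 <= fold_right Rmax 0 L.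
Proof. induction L; simpl; [lra|]. eapply Rle_trans; [apply IHL|apply Rmax_r]. Qed.

Lemma maxnorm_ge m n M i j : (i < m)%nat -> (j < n)%nat -> Rabs (M i j) <= maxnorm m n M.
Proof. intros Hi Hj. unfold maxnorm. apply fold_Rmax_ge. apply in_flat_map.
  exists i. split. apply in_seq; lia. apply in_map_iff. exists j. split; auto. apply in_seq; lia. Qed.

Lemma maxnorm_nonneg m n M : 0 <= maxnorm m n M.
Proof. apply fold_Rmax_nonneg. Qed.

Lemma all_docs_in D n w : In w (all_docs D n) -> forall x, In x w -> (x < D)%nat.
Proof. revert w. induction n; simpl; intros w Hw.
  - destruct Hw as [<-|[]]. simpl; tauto.
  - apply in_flat_map in Hw. destruct Hw as [w' [Hw' Hm]]. apply in_map_iff in Hm.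
    destruct Hm as [j [<- Hj]]. apply in_seq in Hj. intros x [->|Hx]. lia. eapply IHn; eauto. Qed.

Definition prodL (g : nat -> R) (w : list nat) : R := fold_right Rmult 1 (map g w).

Lemma docs_product D n p g :
  LS (all_docs D n) (fun w => doc_prob p w * prodL g w) = (sumR D (fun l => p l * g l)) ^ n.
Proof. induction n.
  - simpl. unfold LS, doc_prob, prodL; simpl. lra.
  - simpl all_docs. rewrite LS_flat_map.
    transitivity (LS (all_docs D n) (fun w => sumR D (fun l => p l * g l) * (doc_prob p w * prodL g w))).
    + apply LS_ext. intros w _. rewrite LS_map, Rmult_comm, <- sumR_scal, sumR_LS.
      apply LS_ext. intros i _. unfold doc_prob, prodL; simpl. ring.
    + rewrite LS_scal, IHn. simpl. ring. Qed.

Lemma doc_prob_nonneg D p w : (forall l, (l < D)%nat -> 0 <= p l) -> (forall x, In x w -> (x < D)%nat) ->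
  0 <= doc_prob p w.
Proof. intros Hp. induction w; intros Hw; unfold doc_prob in *; simpl; [lra|].
  apply Rmult_le_pos. apply Hp, Hw; simpl; auto. apply IHw. intros; apply Hw; simpl; auto. Qed.

Lemma total_prob D n p : sumR D p = 1 -> LS (all_docs D n) (doc_prob p) = 1.
Proof. intros H. transitivity (LS (all_docs D n) (fun w => doc_prob p w * prodL (fun _ => 1) w)).
  apply LS_ext. intros w _. replace (prodL (fun _ => 1) w) with 1. ring.
  unfold prodL. induction w; simpl; auto. rewrite <- IHw. lra.
  rewrite docs_product. replace (sumR D (fun l => p l * 1)) with (sumR D p). rewrite H; apply pow1.
  apply sumR_ext. intros; cbv beta; lra. Qed.

Lemma indic_true (P : Prop) : P -> indic P = 1.
Proof. intros H. unfold indic. destruct (excluded_middle_informative P); tauto. Qed.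
Lemma indic_false (P : Prop) : ~ P -> indic P = 0.
Proof. intros H. unfold indic. destruct (excluded_middle_informative P); tauto. Qed.

Lemma Prob_LS D n p E : Prob D n p E = LS (all_docs D n) (fun w => doc_prob p w * indic (E w)).
Proof. reflexivity. Qed.

Lemma Prob_mono D n p (E F : list nat -> Prop) : (forall l, (l < D)%nat -> 0 <= p l) ->
  (forall w, In w (all_docs D n) -> E w -> F w) -> Prob D n p E <= Prob D n p F.
Proof. intros Hp H. rewrite !Prob_LS. apply LS_le. intros w Hw.
  pose proof (doc_prob_nonneg D p w Hp (all_docs_in D n w Hw)).
  unfold indic. destruct (excluded_middle_informative (E w)), (excluded_middle_informative (F w)).
  lra. exfalso; auto. nra. lra. Qed.

Lemma Prob_nonneg D n p E : (forall l, (l < D)%nat -> 0 <= p l) -> 0 <= Prob D n p E.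
Proof. intros Hp. rewrite Prob_LS. transitivity (LS (all_docs D n) (fun _ => 0)).
  unfold LS. induction (all_docs D n); simpl; lra.
  apply LS_le. intros w Hw. pose proof (doc_prob_nonneg D p w Hp (all_docs_in D n w Hw)).
  unfold indic. destruct (excluded_middle_informative (E w)); lra. Qed.

Lemma Prob_union D n p k (G : list nat -> Prop) (Bad : nat -> list nat -> Prop) :
  (forall l, (l < D)%nat -> 0 <= p l) -> sumR D p = 1 ->
  (forall w, (forall i, (i < k)%nat -> ~ Bad i w) -> G w) ->
  Prob D n p G >= 1 - sumR k (fun i => Prob D n p (Bad i)).
Proof. intros Hp H1 HG. unfold Prob at 1. fold (LS (all_docs D n) (fun w => doc_prob p w * indic (G w))).
  assert (Hs : sumR k (fun i => Prob D n p (Bad i)) =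
     LS (all_docs D n) (fun w => doc_prob p w * sumR k (fun i => indic (Bad i w)))).
  { clear HG. induction k. rewrite sumR_0. unfold LS. induction (all_docs D n); simpl; auto.
    rewrite sumR_0, <- IHl. ring.
    rewrite sumR_S, IHk, Prob_LS, <- LS_plus. apply LS_ext. intros. rewrite sumR_S. ring. }
  rewrite Hs. rewrite <- (total_prob D n p H1). apply Rle_ge.
  set (L := all_docs D n).
  assert (E : LS L (doc_prob p) - LS L (fun w => doc_prob p w * sumR k (fun i => indic (Bad i w)))
     = LS L (fun w => doc_prob p w + -1 * (doc_prob p w * sumR k (fun i => indic (Bad i w)))))
    by (rewrite LS_plus, LS_scal; ring).
  rewrite E. apply LS_le. intros w Hw.
  pose proof (doc_prob_nonneg D p w Hp (all_docs_in D n w Hw)).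
  assert (0 <= sumR k (fun i => indic (Bad i w))).
  { apply sumR_nonneg. intros. unfold indic. destruct (excluded_middle_informative (Bad i w)); lra. }
  destruct (classic (forall i, (i < k)%nat -> ~ Bad i w)) as [Hn|Hn].
  - rewrite (indic_true _ (HG w Hn)).
    replace (sumR k (fun i => indic (Bad i w))) with 0. lra.
    transitivity (sumR k (fun _ => 0)). rewrite sumR_const; lra.
    apply sumR_ext. intros i Hi. rewrite indic_false; auto.
  - apply not_all_ex_not in Hn. destruct Hn as [i Hi].
    assert (Hik : (i < k)%nat /\ Bad i w) by (split; [tauto|]; apply NNPP; tauto).
    destruct Hik as [Hik Hb].
    assert (1 <= sumR k (fun i => indic (Bad i w))).
    { clear -Hik Hb. induction k. lia. rewrite sumR_S.
      assert (0 <= indic (Bad k w)) by (unfold indic; destruct (excluded_middle_informative (Bad k w)); lra).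
      assert (0 <= sumR k (fun i => indic (Bad i w))).
      { apply sumR_nonneg. intros. unfold indic. destruct (excluded_middle_informative (Bad i0 w)); lra. }
      destruct (Nat.eq_dec i k) as [->|]. rewrite indic_true; auto. lra.
      assert (1 <= sumR k (fun i => indic (Bad i w))) by (apply IHk; lia). lra. }
    assert (0 <= indic (G w)) by (unfold indic; destruct (excluded_middle_informative (G w)); lra).
    nra. Qed.

Lemma counts_cons j w l : counts (j :: w) l = counts w l + (if Nat.eqb j l then 1 else 0).
Proof. unfold counts. simpl. destruct (Nat.eq_dec j l) as [->|Hne].
  rewrite Nat.eqb_refl, S_INR. lra. destruct (Nat.eqb_spec j l); [tauto|lra]. Qed.

Lemma sum_counts D b w : (forall x, In x w -> (x < D)%nat) ->
  sumR D (fun l => b l * counts w l) = LS w b.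
Proof. induction w; intros Hw.
  - unfold LS; simpl. transitivity (sumR D (fun _ => 0)). apply sumR_ext. intros; unfold counts; simpl; lra.
    rewrite sumR_const; lra.
  - transitivity (sumR D (fun l => b l * counts w l) + sumR D (fun l => (if Nat.eqb a l then 1 else 0) * b l)).
    rewrite <- sumR_plus. apply sumR_ext. intros l _. rewrite counts_cons. lra.
    rewrite IHw, sumR_indic. unfold LS; simpl. lra. apply Hw; simpl; auto.
    intros; apply Hw; simpl; auto. Qed.

Lemma exp_pow_n x n : exp x ^ n = exp (INR n * x).
Proof. induction n. simpl. rewrite Rmult_0_l, exp_0; auto.
  simpl pow. rewrite IHn, <- exp_plus, S_INR. f_equal. lra. Qed.

Lemma exp_LS s b w : exp (s * LS w b) = prodL (fun x => exp (s * b x)) w.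
Proof. induction w; unfold LS, prodL in *; simpl. rewrite Rmult_0_r, exp_0; auto.
  rewrite <- IHw, <- exp_plus. f_equal. lra. Qed.

Lemma exp_tangent p z : exp z * (1 + p - z) <= exp p.
Proof. replace (exp p) with (exp z * exp (p - z)) by (rewrite <- exp_plus; f_equal; lra).
  apply Rmult_le_compat_l. pose proof (exp_pos z); lra. pose proof (exp_ineq1_le (p - z)); lra. Qed.

Lemma exp_convex a y : -1 <= y <= 1 -> exp (a * y) <= (1 - y)/2 * exp (-a) + (1 + y)/2 * exp a.
Proof. intros Hy. pose proof (exp_tangent (-a) (a*y)). pose proof (exp_tangent a (a*y)).
  assert (exp (a*y) = (1-y)/2 * (exp (a*y) * (1 + -a - a*y)) + (1+y)/2 * (exp (a*y) * (1 + a - a*y))) by field.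
  rewrite H1. apply Rplus_le_compat; apply Rmult_le_compat_l; lra. Qed.

Lemma Rabs_le_inv' x y : Rabs x <= y -> -y <= x <= y.
Proof. unfold Rabs; destruct (Rcase_abs x); lra. Qed.

Lemma mgf_bound D p b lam s :
  (forall l, (l < D)%nat -> 0 <= p l) -> sumR D p = 1 ->
  (forall l, (l < D)%nat -> Rabs (b l) <= lam) -> 0 < lam -> 0 <= s ->
  sumR D (fun l => p l * exp (s * b l)) <= exp (s * sumR D (fun l => p l * b l) + s^2 * lam^2 / 2).
Proof. intros Hp H1 Hb Hl Hs.
  set (mu := sumR D (fun l => p l * b l)).
  set (a := s * lam).
  assert (Hmu : Rabs mu <= lam).
  { eapply Rle_trans. apply sumR_abs. transitivity (sumR D (fun l => p l * lam)).
    apply sumR_le. intros l Hl'. rewrite Rabs_mult, (Rabs_pos_eq (p l)) by auto.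
    apply Rmult_le_compat_l; auto. replace (sumR D (fun l => p l * lam)) with (lam * sumR D p). rewrite H1; lra.
    rewrite <- sumR_scal. apply sumR_ext; intros; cbv beta; lra. }
  transitivity (sumR D (fun l => p l * ((1 - b l / lam)/2 * exp (-a) + (1 + b l / lam)/2 * exp a))).
  { apply sumR_le. intros l Hl'. apply Rmult_le_compat_l; auto.
    replace (s * b l) with (a * (b l / lam)) by (unfold a; field; lra).
    apply exp_convex. pose proof (Hb l Hl'). apply Rabs_le_inv' in H.
    split; [apply (Rmult_le_reg_r lam)|apply (Rmult_le_reg_r lam)]; auto; unfold Rdiv; rewrite Rmult_assoc, Rinv_l; lra. }
  replace (sumR D (fun l => p l * ((1 - b l / lam)/2 * exp (-a) + (1 + b l / lam)/2 * exp a)))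
    with ((1 + mu/lam)/2 * exp a + (1 - mu/lam)/2 * exp (-a)).
  2:{ transitivity (sumR D (fun l => (exp a + exp (-a))/2 * p l + (exp a - exp (-a)) / (2*lam) * (p l * b l))).
      rewrite sumR_plus, !sumR_scal, H1. fold mu. field. lra.
      apply sumR_ext. intros. field. lra. }
  replace (s * mu + s^2*lam^2/2) with (mu/lam * a + a^2/2) by (unfold a; field; lra).
  apply hoeffding_lemma. apply Rabs_le_inv' in Hmu.
  split; [apply (Rmult_le_reg_r lam)|apply (Rmult_le_reg_r lam)]; auto; unfold Rdiv; rewrite Rmult_assoc, Rinv_l; lra.
  unfold a. apply Rmult_le_pos; lra. Qed.

Lemma chernoff D n p b lam t :
  (forall l, (l < D)%nat -> 0 <= p l) -> sumR D p = 1 ->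
  (forall l, (l < D)%nat -> Rabs (b l) <= lam) -> 0 < lam -> 0 <= t ->
  Prob D n p (fun w => LS w b >= INR n * (sumR D (fun l => p l * b l) + t))
  <= exp (- (INR n * t^2 / (2 * lam^2))).
Proof. intros Hp H1 Hb Hl Ht.
  set (mu := sumR D (fun l => p l * b l)).
  set (s := t / lam^2).
  assert (Hs : 0 <= s) by (unfold s; apply Rmult_le_pos; [lra|]; apply Rlt_le, Rinv_0_lt_compat; nra).
  set (c := INR n * (mu + t)).
  transitivity (LS (all_docs D n) (fun w => exp (- (s * c)) * (doc_prob p w * prodL (fun x => exp (s * b x)) w))).
  { rewrite Prob_LS. apply LS_le. intros w Hw.
    pose proof (doc_prob_nonneg D p w Hp (all_docs_in D n w Hw)).
    rewrite <- exp_LS.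
    replace (exp (- (s * c)) * (doc_prob p w * exp (s * LS w b))) with (doc_prob p w * exp (s * LS w b - s * c))
      by (unfold Rminus; rewrite exp_plus; ring).
    apply Rmult_le_compat_l; auto. unfold indic. destruct (excluded_middle_informative _) as [HE|HE].
    - pose proof (exp_ineq1_le (s * LS w b - s * c)). assert (s * LS w b >= s * c) by (apply Rle_ge, Rmult_le_compat_l; lra). lra.
    - pose proof (exp_pos (s * LS w b - s * c)); lra. }
  rewrite LS_scal, docs_product.
  transitivity (exp (- (s * c)) * exp (s * mu + s^2 * lam^2 / 2) ^ n).
  { apply Rmult_le_compat_l. pose proof (exp_pos (- (s * c))); lra.
    apply pow_incr. split. apply sumR_nonneg. intros l Hl'. pose proof (exp_pos (s * b l)). pose proof (Hp l Hl'). nra.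
    apply mgf_bound; auto. }
  rewrite exp_pow_n, <- exp_plus. apply Req_le. f_equal. unfold c, s. field. lra. Qed.

Lemma TLI_cases D k n B lam delta w i :
  let xh := / INR n * sumR D (fun l => B i l * counts w l) in
  let tau := 2 * lam * sqrt (ln (INR k) / INR n) + delta in
  (xh < tau /\ TLI D k n B lam delta w i = 0) \/ (xh >= tau /\ TLI D k n B lam delta w i = xh).
Proof. intros xh tau. unfold TLI. cbv zeta. fold xh. fold tau.
  destruct (Rlt_dec xh tau); [left|right]; split; auto; lra. Qed.

Lemma Prob_False D n p : Prob D n p (fun _ => False) = 0.
Proof. unfold Prob. induction (all_docs D n); simpl; auto. rewrite IHl, indic_false; auto. ring. Qed.

Lemma nnz_zero k z : nnz k z = 0%nat -> forall i, (i < k)%nat -> z i = 0.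
Proof. intros H i Hi. unfold nnz in H. apply length_zero_iff_nil in H.
  destruct (Req_EM_T (z i) 0) as [E|E]; auto. exfalso.
  assert (In i (filter (fun i => if Req_EM_T (z i) 0 then false else true) (seq 0 k))).
  { apply filter_In. split. apply in_seq; lia. destruct (Req_EM_T (z i) 0); tauto. }
  rewrite H in H0; inversion H0. Qed.

Lemma sumR_ge_term k f i : (forall j, (j < k)%nat -> 0 <= f j) -> (i < k)%nat -> f i <= sumR k f.
Proof. induction k; intros H Hi. lia. rewrite sumR_S.
  destruct (Nat.eq_dec i k) as [->|]. pose proof (sumR_nonneg k f). assert (0 <= sumR k f) by (apply H0; intros; apply H; lia). lra.
  assert (f i <= sumR k f) by (apply IHk; [intros; apply H; lia| lia]). pose proof (H k). assert (0 <= f k) by (apply H1; lia). lra. Qed.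

Theorem corollary4p3
  (D k n : nat) (A B : nat -> nat -> R) (delta lam : R) (xs : nat -> R) :
  word_topic D k A ->
  0 <= delta ->
  is_lambda D k A delta lam ->
  min_var_inverse D k A delta lam B ->
  simplex k xs ->
  (0 < n)%nat ->
  (* part 1 *)
  Prob D n (word_dist D k A xs)
    (fun w => forall i, (i < k)%nat ->
       (xs i = 0 -> TLI D k n B lam delta w i = 0) /\
       (xs i >= 4 * lam * sqrt (ln (INR k) / INR n) + 2 * delta ->
          TLI D k n B lam delta w i > 0))
    >= 1 - 2 / INR k
  /\
  (* part 2 *)
  (forall (r : nat) (eps : R),
     sparse k r xs ->
     (forall i, (i < k)%nat -> xs i <> 0 -> xs i >= eps / INR r) ->
     eps > 4 * delta * INR r ->
     INR n >= 64 * lam ^ 2 * INR r ^ 2 * ln (INR k) / eps ^ 2 ->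
     Prob D n (word_dist D k A xs)
       (fun w => forall i, (i < k)%nat ->
          (TLI D k n B lam delta w i <> 0 <-> xs i <> 0))
       >= 1 - 2 / INR k).
Proof.
  intros [HA0 HA1] Hdel Hlam [Hfeas HBn] [Hx0 Hx1] Hn.
  set (p := word_dist D k A xs).
  assert (Hk : (1 <= k)%nat).
  { destruct k; [|lia]. unfold sumR in Hx1; simpl in Hx1; lra. }
  assert (Hp : forall l, (l < D)%nat -> 0 <= p l).
  { intros l Hl. unfold p, word_dist. apply sumR_nonneg. intros j Hj.
    apply Rmult_le_pos; auto. }
  assert (Hp1 : sumR D p = 1).
  { unfold p, word_dist. rewrite sumR_swap. rewrite <- Hx1. apply sumR_ext. intros j Hj.
    transitivity (xs j * sumR D (fun l => A l j)).
    rewrite <- sumR_scal; apply sumR_ext; intros; cbv beta; lra. rewrite HA1; auto; lra. }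
  assert (HBb : forall i l, (i < k)%nat -> (l < D)%nat -> Rabs (B i l) <= lam).
  { intros i l Hi Hl. rewrite <- HBn. apply maxnorm_ge; auto. }
  assert (Hlam0 : 0 <= lam) by (rewrite <- HBn; apply maxnorm_nonneg).
  assert (Hxle : forall i, (i < k)%nat -> xs i <= 1).
  { intros i Hi. rewrite <- Hx1. apply sumR_ge_term; auto. }
  set (mu := fun i => sumR D (fun l => p l * B i l)).
  assert (Hmu : forall i, (i < k)%nat -> Rabs (mu i - xs i) <= delta).
  { intros i Hi.
    assert (E1 : mu i = sumR k (fun j => matmul D B A i j * xs j)).
    { unfold mu, p, word_dist. transitivity (sumR D (fun l => sumR k (fun j => B i l * A l j * xs j))).
      apply sumR_ext. intros l _. rewrite Rmult_comm, <- sumR_scal. apply sumR_ext. intros; cbv beta; lra.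
      rewrite sumR_swap. apply sumR_ext. intros j _. unfold matmul. rewrite Rmult_comm, <- sumR_scal.
      apply sumR_ext. intros; cbv beta; lra. }
    assert (E2 : xs i = sumR k (fun j => idm i j * xs j)) by (unfold idm; rewrite sumR_indic; auto).
    rewrite E1, E2. replace (sumR k (fun j => matmul D B A i j * xs j) - sumR k (fun j => idm i j * xs j))
      with (sumR k (fun j => (matmul D B A i j - idm i j) * xs j)).
    2:{ unfold Rminus. rewrite <- (Rmult_1_l (sumR k (fun j => idm i j * xs j))) at 1.
        rewrite Ropp_mult_distr_l, <- sumR_scal, <- sumR_plus. apply sumR_ext. intros; cbv beta; lra. }
    eapply Rle_trans. apply sumR_abs. rewrite <- (Rmult_1_r delta), <- Hx1, <- sumR_scal.
    apply sumR_le. intros j Hj. rewrite Rabs_mult, (Rabs_pos_eq (xs j)) by auto.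
    apply Rmult_le_compat_r; auto. unfold feasible in Hfeas. eapply Rle_trans; [|exact Hfeas].
    apply (maxnorm_ge k k (fun i j => matmul D B A i j - idm i j)); auto. }
  assert (Hxh : forall w, In w (all_docs D n) -> forall i,
     / INR n * sumR D (fun l => B i l * counts w l) = / INR n * LS w (B i)).
  { intros w Hw i. rewrite sum_counts; auto. apply (all_docs_in D n); auto. }
  assert (HnR : 0 < INR n) by (apply lt_0_INR; lia).
  assert (Hkln : 0 <= ln (INR k)).
  { rewrite <- ln_1. destruct (Nat.eq_dec k 1) as [->|]. simpl; lra.
    apply Rlt_le, ln_increasing; [lra|]. replace 1 with (INR 1) by reflexivity. apply lt_INR; lia. }
  set (sq := sqrt (ln (INR k) / INR n)).
  assert (Hsq0 : 0 <= sq) by apply sqrt_pos.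
  assert (Hsq2 : sq * sq = ln (INR k) / INR n).
  { apply sqrt_sqrt. apply Rmult_le_pos; auto. apply Rlt_le, Rinv_0_lt_compat; auto. }
  set (t := 2 * lam * sq).
  assert (P1 : Prob D n p
    (fun w => forall i, (i < k)%nat ->
       (xs i = 0 -> TLI D k n B lam delta w i = 0) /\
       (xs i >= 4 * lam * sq + 2 * delta -> TLI D k n B lam delta w i > 0))
    >= 1 - 2 / INR k).
  { destruct (Nat.le_gt_cases k 2) as [Hk2|Hk3].
    - assert (HkR : INR k <= 2) by (replace 2 with (INR 2) by reflexivity; apply le_INR; auto).
      assert (HkR1 : 1 <= INR k) by (replace 1 with (INR 1) by reflexivity; apply le_INR; auto).
      assert (1 <= 2 / INR k).
      { apply (Rmult_le_reg_r (INR k)); [lra|]. replace (2 / INR k * INR k) with 2 by (field; lra). lra. }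
      pose proof (Prob_nonneg D n p (fun w => forall i, (i < k)%nat ->
       (xs i = 0 -> TLI D k n B lam delta w i = 0) /\
       (xs i >= 4 * lam * sq + 2 * delta -> TLI D k n B lam delta w i > 0)) Hp). lra.
    - assert (HkR : 3 <= INR k) by (replace 3 with (INR 3) by (simpl; lra); apply le_INR; lia).
      assert (Hkln' : 0 < ln (INR k)) by (rewrite <- ln_1; apply ln_increasing; lra).
      set (thr := 4 * lam * sq + 2 * delta).
      set (Bad := fun i w => (xs i = 0 /\ TLI D k n B lam delta w i <> 0) \/
                             (xs i >= thr /\ ~ TLI D k n B lam delta w i > 0)).
      assert (Hbad : forall i, (i < k)%nat -> Prob D n p (Bad i) <= / (INR k * INR k)).
      { intros i Hi.
        assert (HTc : forall w, In w (all_docs D n) ->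
          (/ INR n * LS w (B i) < t + delta /\ TLI D k n B lam delta w i = 0) \/
          (/ INR n * LS w (B i) >= t + delta /\ TLI D k n B lam delta w i = / INR n * LS w (B i))).
        { intros w Hw. rewrite <- (Hxh w Hw i). apply TLI_cases. }
        assert (HLS : forall w, LS w (B i) = INR n * (/ INR n * LS w (B i))) by (intros; field; lra).
        destruct (Req_dec lam 0) as [Hl0|Hl0].
        -
          assert (HB0 : forall j l, (j < k)%nat -> (l < D)%nat -> B j l = 0).
          { intros j l Hj Hl. pose proof (HBb j l Hj Hl). rewrite Hl0 in H. pose proof (Rabs_pos (B j l)).
            assert (Rabs (B j l) = 0) by lra. apply Rabs_eq_0 in H1; auto. }
          assert (Hd1 : 1 <= delta).
          { assert (Hm : matmul D B A 0%nat 0%nat = 0).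
            { unfold matmul. transitivity (sumR D (fun _ => 0)). apply sumR_ext. intros l Hl.
              rewrite (HB0 0%nat l) by lia. lra. rewrite sumR_const; lra. }
            pose proof (maxnorm_ge k k (fun i j => matmul D B A i j - idm i j) 0 0 ltac:(lia) ltac:(lia)).
            unfold feasible in Hfeas. cbv beta in H. rewrite Hm in H. replace (idm 0 0) with 1 in H by reflexivity.
            assert (Rabs (0-1) = 1) by (unfold Rabs; destruct (Rcase_abs (0-1)); lra). lra. }
          assert (Ht0 : t = 0) by (unfold t; rewrite Hl0; ring).
          eapply Rle_trans. apply (Prob_mono D n p (Bad i) (fun _ => False)); auto.
          + intros w Hw Hb.
            assert (HL0 : LS w (B i) = 0).
            { rewrite <- (sum_counts D (B i) w) by (apply (all_docs_in D n); auto).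
              transitivity (sumR D (fun _ => 0)). apply sumR_ext. intros l Hl. rewrite HB0 by auto. lra.
              rewrite sumR_const; lra. }
            assert (HT : TLI D k n B lam delta w i = 0).
            { destruct (HTc w Hw) as [[_ E]|[E _]]; auto. rewrite HL0, Ht0 in E. lra. }
            destruct Hb as [[_ Hb]|[Hb _]]. tauto. unfold thr in Hb. rewrite Hl0 in Hb.
            pose proof (Hxle i Hi). lra.
          + rewrite Prob_False. apply Rlt_le, Rinv_0_lt_compat. nra.
        - assert (Hl : 0 < lam) by lra.
          assert (Hsqp : 0 < sq).
          { unfold sq. apply sqrt_lt_R0. apply Rmult_lt_0_compat; auto. apply Rinv_0_lt_compat; auto. }
          assert (Htp : 0 < t) by (unfold t; apply Rmult_lt_0_compat; lra).
          assert (Hexp : exp (- (INR n * t^2 / (2 * lam^2))) = / (INR k * INR k)).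
          { replace (INR n * t^2 / (2 * lam^2)) with (2 * (INR n * (sq * sq))) by (unfold t; field; lra).
            rewrite Hsq2. replace (2 * (INR n * (ln (INR k) / INR n))) with (ln (INR k) + ln (INR k)) by (field; lra).
            rewrite exp_Ropp, exp_plus, exp_ln by lra. reflexivity. }
          rewrite <- Hexp.
          pose proof (Rabs_le_inv' _ _ (Hmu i Hi)) as Hmi.
          assert (HbB : forall l, (l < D)%nat -> Rabs (B i l) <= lam) by (intros; apply HBb; auto).
          destruct (Req_dec (xs i) 0) as [Hx|Hx].
          + eapply Rle_trans. apply (Prob_mono D n p (Bad i)
               (fun w => LS w (B i) >= INR n * (sumR D (fun l => p l * B i l) + t))); auto.
            * intros w Hw Hb. destruct Hb as [[_ Hb]|[Hb _]].
              -- destruct (HTc w Hw) as [[_ E]|[E _]]. tauto.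
                 change (sumR D (fun l => p l * B i l)) with (mu i). rewrite (HLS w).
                 apply Rle_ge, Rmult_le_compat_l; lra.
              -- unfold thr in Hb. nra.
            * apply chernoff; auto. lra.
          + destruct (Rge_dec (xs i) thr) as [Hth|Hth].
            * eapply Rle_trans. apply (Prob_mono D n p (Bad i)
               (fun w => LS w (fun l => -1 * B i l) >= INR n * (sumR D (fun l => p l * (-1 * B i l)) + t))); auto.
              -- intros w Hw Hb. destruct Hb as [[Hb _]|[_ Hb]]. tauto.
                 assert (Hxh2 : / INR n * LS w (B i) <= t + delta).
                 { destruct (HTc w Hw) as [[E _]|[_ E]]. lra. rewrite E in Hb. lra. }
                 rewrite LS_scal. replace (sumR D (fun l => p l * (-1 * B i l))) with (-1 * mu i).
                 2:{ unfold mu. rewrite <- sumR_scal. apply sumR_ext. intros; cbv beta; lra. }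
                 rewrite (HLS w). unfold thr in Hth.
                 assert (4*lam*sq = 2*t) by (unfold t; ring). assert (mu i - t >= / INR n * LS w (B i)) by lra.
                 apply Rle_ge. replace (-1 * (INR n * (/ INR n * LS w (B i)))) with (INR n * (- (/ INR n * LS w (B i)))) by ring.
                 apply Rmult_le_compat_l; lra.
              -- apply chernoff; auto. intros l Hl'. rewrite Rabs_mult, Rabs_m1, Rmult_1_l. auto. lra.
            * eapply Rle_trans. apply (Prob_mono D n p (Bad i) (fun _ => False)); auto.
              -- intros w Hw Hb. destruct Hb as [[Hb _]|[Hb _]]; tauto.
              -- rewrite Prob_False. apply Rlt_le, exp_pos. }
      eapply Rge_trans. apply (Prob_union D n p k _ Bad Hp Hp1).
      + intros w Hw i Hi. split; intros Hc; apply NNPP; intro Hc'; apply (Hw i Hi); unfold Bad.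
        left; auto. right; split; auto.
      + apply Rle_ge. assert (sumR k (fun i => Prob D n p (Bad i)) <= 2 / INR k); [|lra].
        transitivity (sumR k (fun _ => / (INR k * INR k))). apply sumR_le; auto.
        rewrite sumR_const. apply (Rmult_le_reg_r (INR k)); [lra|].
        replace (INR k * / (INR k * INR k) * INR k) with 1 by (field; lra).
        replace (2 / INR k * INR k) with 2 by (field; lra). lra. }
  split. exact P1.
  intros r eps Hsp Heps Hed Hnl.
  eapply Rge_trans; [|exact P1]. apply Rle_ge. apply Prob_mono; auto.
  assert (Hr : (1 <= r)%nat).
  { destruct r; [|lia]. exfalso. unfold sparse in Hsp. assert (nnz k xs = 0%nat) by lia.
    pose proof (nnz_zero k xs H).
    assert (sumR k xs = 0). { transitivity (sumR k (fun _ => 0)). apply sumR_ext; auto. rewrite sumR_const; lra. }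
    lra. }
  assert (HR : 1 <= INR r) by (replace 1 with (INR 1) by reflexivity; apply le_INR; lia).
  assert (Hthr : 4 * lam * sq + 2 * delta <= eps / INR r).
  { assert (Heps0 : 0 < eps) by nra.
    assert (H64 : 64 * lam^2 * INR r^2 * ln (INR k) <= eps^2 * INR n).
    { apply Rge_le in Hnl. apply (Rmult_le_compat_l (eps^2)) in Hnl; [|nra].
      replace (eps ^ 2 * (64 * lam ^ 2 * INR r ^ 2 * ln (INR k) / eps ^ 2)) with (64 * lam ^ 2 * INR r ^ 2 * ln (INR k)) in Hnl by (field; lra).
      exact Hnl. }
    assert (Hsq : (4 * lam * sq) * (4 * lam * sq) <= (eps / (2 * INR r)) * (eps / (2 * INR r))).
    { replace ((4 * lam * sq) * (4 * lam * sq)) with (16 * lam^2 * (sq * sq)) by ring.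
      rewrite Hsq2. replace ((eps / (2 * INR r)) * (eps / (2 * INR r))) with (eps^2 / (4 * INR r^2)) by (field; lra).
      apply (Rmult_le_reg_r (4 * INR r^2 * INR n)). assert (0 < INR r ^ 2) by (apply pow_lt; lra). apply Rmult_lt_0_compat; lra.
      replace (16 * lam ^ 2 * (ln (INR k) / INR n) * (4 * INR r ^ 2 * INR n)) with (64 * lam^2 * INR r^2 * ln (INR k)) by (field; lra).
      replace (eps ^ 2 / (4 * INR r ^ 2) * (4 * INR r ^ 2 * INR n)) with (eps^2 * INR n) by (field; lra). exact H64. }
    assert (Hpos : 0 <= eps / (2 * INR r)) by (apply Rmult_le_pos; [lra|]; apply Rlt_le, Rinv_0_lt_compat; lra).
    assert (Ha : 4 * lam * sq <= eps / (2 * INR r)).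
    { assert (0 <= 4 * lam * sq) by (apply Rmult_le_pos; lra). nra. }
    assert (Hb : 2 * delta <= eps / (2 * INR r)).
    { apply (Rmult_le_reg_r (2 * INR r)). lra. replace (eps / (2 * INR r) * (2 * INR r)) with eps by (field; lra). lra. }
    replace (eps / INR r) with (eps / (2 * INR r) + eps / (2 * INR r)) by (field; lra). lra. }
  intros w Hw HG i Hi. destruct (HG i Hi) as [G1 G2]. split.
  - intros HT Hx. apply HT, G1, Hx.
  - intros Hx. pose proof (G2 (Rle_ge _ _ (Rle_trans _ _ _ Hthr (Rge_le _ _ (Heps i Hi Hx))))). lra.
Qed.
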